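(* Let $B$ be a category, $A$ the discrete category on the set of objects of $B$, and $i\colon A\to B$ the inclusion, regarded in the bicategory $\mathcal K$ of profunctors via $i_*$, with right adjoint $i^*$. Let $d\colon \mathrm{ob}B\to\mathrm{ob}B$ be a function, regarded as a functor $d\colon A\to B$ and hence as the profunctor $d_*$. Then monoid structures on $d_*$ in the skew monoidal category $\mathcal K(A,B)$ (tensor $g\otimes f=gi^*f$, unit $i$, $\lambda=\epsilon f$, $\rho=f\eta$) are in bijection with mw-monad structures on $B$ with object function $d$: a 2-cell $K\colon i\to d$ corresponds to morphisms $K_x\colon x\to dx$, a 2-cell $T\colon di^*d\to d$ corresponds to functions $T\colon B(y,dx)\to B(dy,dx)$, and the three monoid axioms correspond exactly to the three mw-monad axioms. Under this identification, the monoidal functor $u=\mathcal K(i,B)\colon\mathcal K(B,B)\to\mathcal K(A,B)$ sends a monad on $B$ to its corresponding mw-monad (with $Tf$ given by $Df$ followed by the multiplication).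
   Context: A profunctor $p\colon A\to B$ is a functor $B^{op}\times A\to\mathbf{Set}$; profunctors compose by coends, forming a bicategory. A functor $f\colon A\to B$ gives a profunctor $f_*(b,a)=B(b,fa)$, which has right adjoint $f^*(a,b)=B(fa,b)$. A monoid in a skew monoidal category $(\mathcal C,\otimes,I,\alpha,\lambda,\rho)$ is an object $M$ with $\mu\colon M\otimes M\to M$ and $\eta\colon I\to M$ with $\mu(\mu\otimes1)=\mu(1\otimes\mu)\alpha$, $\mu(\eta\otimes1)=\lambda_M$, $\mu(1\otimes\eta)\rho_M=1_M$. An mw-monad on a category $\mathcal C$ consists of a function $D\colon\mathrm{ob}\,\mathcal C\to\mathrm{ob}\,\mathcal C$, functions $T\colon\mathcal C(X,DY)\to\mathcal C(DX,DY)$, and morphisms $K_X\colon X\to DX$ such that $Tg\circ Tf=T(Tg\circ f)$, $Tf\circ K=f$, and $TK_X=1_{DX}$. *)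

(* Defs.v *)
From Stdlib Require Import Relations ClassicalEpsilon.



Record Cat := {
  ob : Type;
  hom : ob -> ob -> Type;
  idm : forall a, hom a a;
  cmp : forall a b c, hom b c -> hom a b -> hom a c;
  cmp_assoc : forall a b c e (h : hom c e) (g : hom b c) (f : hom a b),
      cmp a c e h (cmp a b c g f) = cmp a b e (cmp b c e h g) f;
  cmp_idl : forall a b (f : hom a b), cmp a b b (idm b) f = f;
  cmp_idr : forall a b (f : hom a b), cmp a a b f (idm a) = f }.
Arguments hom {_} _ _.
Arguments idm {_} _.
Arguments cmp {_ _ _ _} _ _.

Definition Disc (X : Type) : Cat.
Proof.
  refine {| ob := X; hom := fun a b => a = b; idm := fun a => eq_refl;
            cmp := fun a b c g f => eq_trans f g |}.
  - intros a b c e h g f; destruct h, g, f; reflexivity.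
  - intros a b f; destruct f; reflexivity.
  - intros a b f; destruct f; reflexivity.
Defined.

Record Functor (C D : Cat) := {
  fob : ob C -> ob D;
  fmap : forall a b, @hom C a b -> @hom D (fob a) (fob b);
  fmap_id : forall a, fmap a a (@idm C a) = @idm D (fob a);
  fmap_cmp : forall a b c (g : @hom C b c) (f : @hom C a b),
      fmap a c (@cmp C _ _ _ g f) = @cmp D _ _ _ (fmap b c g) (fmap a b f) }.
Arguments fob {_ _} _ _.
Arguments fmap {_ _} _ {_ _} _.

Definition discF (B : Cat) (f : ob B -> ob B) : Functor (Disc (ob B)) B.
Proof.
  refine (@Build_Functor (Disc (ob B)) B f
            (fun a b (e : @hom (Disc (ob B)) a b) =>
              match e in _ = b' return @hom B (f a) (f b') with
              | eq_refl => idm (f a) end) _ _).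
  - intros a; reflexivity.
  - intros a b c g h; simpl in *; destruct g, h; simpl.
    symmetry; apply cmp_idl.
Defined.

Definition incl (B : Cat) : Functor (Disc (ob B)) B := discF B (fun x => x).

(** * Profunctors  p : C -> D  is  D^op x C -> Type  *)
Record Prof (C D : Cat) := {
  pob : ob D -> ob C -> Type;
  pmap : forall d' d c c', @hom D d' d -> @hom C c c' -> pob d c -> pob d' c' }.
Arguments pob {_ _} _ _ _.
Arguments pmap {_ _} _ {_ _ _ _} _ _ _.

Definition HomP (C : Cat) : Prof C C :=
  {| pob := fun d c => @hom C d c;
     pmap := fun d' d c c' h k x => cmp k (cmp x h) |}.

Definition pstar {C D : Cat} (F : Functor C D) : Prof C D :=
  {| pob := fun d c => @hom D d (fob F c);
     pmap := fun d' d c c' h k x => cmp (fmap F k) (cmp x h) |}.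
Definition pupper {C D : Cat} (F : Functor C D) : Prof D C :=
  {| pob := fun c d => @hom D (fob F c) d;
     pmap := fun c' c d d' k h x => cmp h (cmp x (fmap F k)) |}.

Definition Quot (X : Type) (R : X -> X -> Prop) : Type :=
  { P : X -> Prop | exists x, P = clos_refl_sym_trans X R x }.
Definition cls {X : Type} {R : X -> X -> Prop} (x : X) : Quot X R :=
  exist _ (clos_refl_sym_trans X R x) (ex_intro _ x eq_refl).
Definition rep {X : Type} {R : X -> X -> Prop} (q : Quot X R) : X :=
  proj1_sig (constructive_indefinite_description _ (proj2_sig q)).

(** * Composition of profunctors by coends:
      (q p)(e,c) = \int^d q(e,d) x p(d,c) *)
Section Comp.
Context {C D E : Cat} (q : Prof D E) (p : Prof C D).
Definition CTot (e : ob E) (c : ob C) : Type :=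
  { d : ob D & (pob q e d * pob p d c)%type }.
Inductive CRel (e : ob E) (c : ob C) : CTot e c -> CTot e c -> Prop :=
 | crel : forall d d' (k : @hom D d d') x y,
     CRel e c (existT (fun d0 => (pob q e d0 * pob p d0 c)%type) d' (pmap q (idm e) k x, y))
          (existT (fun d0 => (pob q e d0 * pob p d0 c)%type) d (x, pmap p k (idm c) y)).
Definition pcomp : Prof C E :=
  {| pob := fun e c => Quot (CTot e c) (CRel e c);
     pmap := fun e' e c c' h k z =>
       let '(existT _ d (x, y)) := rep z in
       cls (existT _ d (pmap q h (idm d) x, pmap p (idm d) k y)) |}.
End Comp.

Definition Tr {C D : Cat} (P Q : Prof C D) : Type :=
  forall d c, pob P d c -> pob Q d c.
Definition Natural {C D : Cat} {P Q : Prof C D} (t : Tr P Q) : Prop :=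
  forall d' d c c' (h : @hom D d' d) (k : @hom C c c') (x : pob P d c),
    t d' c' (pmap P h k x) = pmap Q h k (t d c x).
Definition TrEq {C D : Cat} {P Q : Prof C D} (s t : Tr P Q) : Prop :=
  forall d c x, s d c x = t d c x.
Definition vcomp {C D : Cat} {P Q R : Prof C D} (t : Tr Q R) (s : Tr P Q)
  : Tr P R := fun d c x => t d c (s d c x).
Definition tid {C D : Cat} (P : Prof C D) : Tr P P := fun _ _ x => x.

Definition hcomp {C D E : Cat} {q q' : Prof D E} {p p' : Prof C D}
  (b : Tr q q') (g : Tr p p') : Tr (pcomp q p) (pcomp q' p') :=
  fun e c z => let '(existT _ d (x, y)) := rep z in
               cls (existT _ d (b e d x, g d c y)).

Definition assoc {C D E F : Cat} (r : Prof E F) (q : Prof D E) (p : Prof C D)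
  : Tr (pcomp (pcomp r q) p) (pcomp r (pcomp q p)) :=
  fun f c z => let '(existT _ d (w, y)) := rep z in
               let '(existT _ e (x, v)) := rep w in
               cls (existT _ e (x, cls (existT _ d (v, y)))).
Definition assoc_inv {C D E F : Cat} (r : Prof E F) (q : Prof D E) (p : Prof C D)
  : Tr (pcomp r (pcomp q p)) (pcomp (pcomp r q) p) :=
  fun f c z => let '(existT _ e (x, w)) := rep z in
               let '(existT _ d (v, y)) := rep w in
               cls (existT _ d (cls (existT _ e (x, v)), y)).
Definition lunit {C D : Cat} (p : Prof C D) : Tr (pcomp (HomP D) p) p :=
  fun d c z => let '(existT _ d' (h, y)) := rep z in pmap p h (idm c) y.
Definition lunit_inv {C D : Cat} (p : Prof C D) : Tr p (pcomp (HomP D) p) :=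
  fun d c y => cls (existT _ d (idm d, y)).
Definition runit {C D : Cat} (p : Prof C D) : Tr (pcomp p (HomP C)) p :=
  fun d c z => let '(existT _ c' (y, k)) := rep z in pmap p (idm d) k y.
Definition runit_inv {C D : Cat} (p : Prof C D) : Tr p (pcomp p (HomP C)) :=
  fun d c y => cls (existT _ c (y, idm c)).

Definition adj_unit {C D : Cat} (F : Functor C D)
  : Tr (HomP C) (pcomp (pupper F) (pstar F)) :=
  fun c' c k => cls (existT _ (fob F c)
                  ((fmap F k : pob (pupper F) c' (fob F c)),
                   (idm (fob F c) : pob (pstar F) (fob F c) c))).
Definition adj_counit {C D : Cat} (F : Functor C D)
  : Tr (pcomp (pstar F) (pupper F)) (HomP D) :=
  fun d d' z => let '(existT _ c (x, y)) := rep z in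
                (cmp (y : @hom D (fob F c) d') (x : @hom D d (fob F c)) : pob (HomP D) d d').

Section Skew.
Context (B : Cat).
Notation A := (Disc (ob B)).
Notation i := (incl B).
Definition tens (g f : Prof A B) : Prof A B := pcomp g (pcomp (pupper i) f).
Definition tens2 {g g' f f' : Prof A B} (b : Tr g g') (c : Tr f f')
  : Tr (tens g f) (tens g' f') := hcomp b (hcomp (tid (pupper i)) c).
Definition unitK : Prof A B := pstar i.
Definition alphaK (h g f : Prof A B) : Tr (tens (tens h g) f) (tens h (tens g f)) :=
  vcomp (hcomp (tid h) (assoc (pupper i) g (pcomp (pupper i) f)))
        (assoc h (pcomp (pupper i) g) (pcomp (pupper i) f)).
Definition lamK (f : Prof A B) : Tr (tens unitK f) f :=
  vcomp (lunit f) (vcomp (hcomp (adj_counit i) (tid f))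
                         (assoc_inv (pstar i) (pupper i) f)).
Definition rhoK (f : Prof A B) : Tr f (tens f unitK) :=
  vcomp (hcomp (tid f) (adj_unit i)) (runit_inv f).

Definition MonAssoc {M : Prof A B} (mu : Tr (tens M M) M) : Prop :=
  TrEq (vcomp mu (tens2 mu (tid M)))
       (vcomp mu (vcomp (tens2 (tid M) mu) (alphaK M M M))).
Definition MonLeft {M : Prof A B} (mu : Tr (tens M M) M) (eta : Tr unitK M) : Prop :=
  TrEq (vcomp mu (tens2 eta (tid M))) (lamK M).
Definition MonRight {M : Prof A B} (mu : Tr (tens M M) M) (eta : Tr unitK M) : Prop :=
  TrEq (vcomp mu (vcomp (tens2 (tid M) eta) (rhoK M))) (tid M).
Definition Monoid (M : Prof A B) (mu : Tr (tens M M) M) (eta : Tr unitK M) : Prop :=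
  MonAssoc mu /\ MonLeft mu eta /\ MonRight mu eta.

Definition dstar (d : ob B -> ob B) : Prof A B := pstar (discF B d).

Definition PhiK (d : ob B -> ob B) (eta : Tr unitK (dstar d)) (x : ob B)
  : @hom B x (d x) := eta x x (idm x).
Definition PhiT (d : ob B -> ob B) (mu : Tr (tens (dstar d) (dstar d)) (dstar d))
  (x y : ob B) (f : @hom B x (d y)) : @hom B (d x) (d y) :=
  mu (d x) y (cls (existT _ x ((idm (d x) : pob (dstar d) (d x) x),
                               cls (existT _ x ((idm x : pob (pupper i) x x),
                                                (f : pob (dstar d) x y)))))).

Definition uK (p : Prof B B) : Prof A B := pcomp p (pstar i).
Definition uK2 {p p' : Prof B B} (b : Tr p p') : Tr (uK p) (uK p') :=
  hcomp b (tid (pstar i)).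
(** u(g) (x) u(f) -> u(g f), i.e. g eps f i, with coherence isos. *)
Definition uK_mult (g f : Prof B B) : Tr (tens (uK g) (uK f)) (uK (pcomp g f)) :=
  vcomp (assoc_inv g f (pstar i))
  (vcomp (hcomp (tid g) (lunit (pcomp f (pstar i))))
  (vcomp (hcomp (tid g) (hcomp (adj_counit i) (tid (pcomp f (pstar i)))))
  (vcomp (hcomp (tid g) (assoc_inv (pstar i) (pupper i) (pcomp f (pstar i))))
         (assoc g (pstar i) (pcomp (pupper i) (pcomp f (pstar i))))))).
Definition uK_unit : Tr unitK (uK (HomP B)) := lunit_inv (pstar i).
End Skew.

Definition MwAssoc {B : Cat} {D : ob B -> ob B}
  (T : forall x y, @hom B x (D y) -> @hom B (D x) (D y)) : Prop :=
  forall x y z (f : @hom B x (D y)) (g : @hom B y (D z)),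
    cmp (T y z g) (T x y f) = T x z (cmp (T y z g) f).
Definition MwLeft {B : Cat} {D : ob B -> ob B}
  (T : forall x y, @hom B x (D y) -> @hom B (D x) (D y))
  (K : forall x, @hom B x (D x)) : Prop :=
  forall x y (f : @hom B x (D y)), cmp (T x y f) (K x) = f.
Definition MwRight {B : Cat} {D : ob B -> ob B}
  (T : forall x y, @hom B x (D y) -> @hom B (D x) (D y))
  (K : forall x, @hom B x (D x)) : Prop :=
  forall x, T x x (K x) = idm (D x).
Definition MwMonad {B : Cat} {D : ob B -> ob B}
  (T : forall x y, @hom B x (D y) -> @hom B (D x) (D y))
  (K : forall x, @hom B x (D x)) : Prop :=
  MwAssoc T /\ MwLeft T K /\ MwRight T K.

Definition IsMonad (B : Cat) (Dm : Functor B B)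
  (m : forall x, @hom B (fob Dm (fob Dm x)) (fob Dm x))
  (e : forall x, @hom B x (fob Dm x)) : Prop :=
  (forall a b (f : @hom B a b),
      cmp (fmap Dm f) (m a) = cmp (m b) (fmap Dm (fmap Dm f))) /\
  (forall a b (f : @hom B a b), cmp (fmap Dm f) (e a) = cmp (e b) f) /\
  (forall a, cmp (m a) (fmap Dm (m a)) = cmp (m a) (m (fob Dm a))) /\
  (forall a, cmp (m a) (e (fob Dm a)) = idm (fob Dm a)) /\
  (forall a, cmp (m a) (fmap Dm (e a)) = idm (fob Dm a)).

Section MonadMonoid.
Context (B : Cat) (Dm : Functor B B)
  (m : forall x, @hom B (fob Dm (fob Dm x)) (fob Dm x))
  (e : forall x, @hom B x (fob Dm x)).
(** The multiplication D_* D_* => D_* (i.e. (DD)_* = D_* D_* followed by m_* ). *)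
Definition muD : Tr (pcomp (pstar Dm) (pstar Dm)) (pstar Dm) :=
  fun b a z => let '(existT _ c (x, y)) := rep z in
     (cmp (m a) (cmp (fmap Dm (y : @hom B c (fob Dm a))) (x : @hom B b (fob Dm c)))
       : pob (pstar Dm) b a).
Definition etaD : Tr (HomP B) (pstar Dm) :=
  fun b a h => (cmp (e a) (h : @hom B b a) : pob (pstar Dm) b a).
(** The canonical iso u(D_* ) = D_* i_* ~= (D i)_* = d_*, d = ob-part of D. *)
Definition phiD : Tr (uK B (pstar Dm)) (dstar B (fob Dm)) :=
  fun b a z => let '(existT _ b' (x, y)) := rep z in
     (cmp (fmap Dm (y : @hom B b' a)) (x : @hom B b (fob Dm b'))
       : pob (dstar B (fob Dm)) b a).
Definition phiD_inv : Tr (dstar B (fob Dm)) (uK B (pstar Dm)) :=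
  fun b a z => cls (existT _ a ((z : pob (pstar Dm) b a),
                                 (@idm B a : pob (pstar (incl B)) a a))).
(** The monoid u(D_* ), transported to d_* along phiD. *)
Definition uMu : Tr (tens B (dstar B (fob Dm)) (dstar B (fob Dm))) (dstar B (fob Dm)) :=
  vcomp phiD (vcomp (uK2 B muD)
    (vcomp (uK_mult B (pstar Dm) (pstar Dm)) (tens2 B phiD_inv phiD_inv))).
Definition uEta : Tr (unitK B) (dstar B (fob Dm)) :=
  vcomp phiD (vcomp (uK2 B etaD) (uK_unit B)).
End MonadMonoid.

(* Main.v *)
Require Import Defs.
From Stdlib Require Import Relations ClassicalEpsilon ProofIrrelevance FunctionalExtensionality PropExtensionality.

Ltac nrm := repeat (rewrite ?cmp_idl, ?cmp_idr, ?cmp_assoc).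


Section Q.
Context {X : Type} {R : X -> X -> Prop}.
Lemma sig_eq_pred (P1 P2 : X -> Prop) (H1 : exists x, P1 = clos_refl_sym_trans X R x) (H2 : exists x, P2 = clos_refl_sym_trans X R x) :
  P1 = P2 -> exist (fun P => exists x, P = clos_refl_sym_trans X R x) P1 H1 = exist _ P2 H2.
Proof. intros ->. f_equal. apply proof_irrelevance. Qed.

Lemma cls_rep (q : Quot X R) : cls (rep q) = q.
Proof.
  unfold rep, cls. destruct (constructive_indefinite_description _ (proj2_sig q)) as [x Hx]. simpl.
  destruct q as [P HP]. simpl in Hx. apply sig_eq_pred. symmetry; exact Hx.
Qed.

Lemma cls_eq (x y : X) : clos_refl_sym_trans X R x y -> @cls X R x = cls y.
Proof. intro H. unfold cls. apply sig_eq_pred. apply functional_extensionality; intro z.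
  apply propositional_extensionality; split; intro Hz.
  - eapply rst_trans; [apply rst_sym; exact H| exact Hz].
  - eapply rst_trans; [exact H| exact Hz]. Qed.

Lemma rep_rel (x : X) : clos_refl_sym_trans X R (rep (@cls X R x)) x.
Proof. pose proof (f_equal (@proj1_sig _ _) (cls_rep (@cls X R x))) as E.
  change (clos_refl_sym_trans X R (rep (@cls X R x)) = clos_refl_sym_trans X R x) in E.
  rewrite E. apply rst_refl. Qed.

Lemma lift {Y} (F : X -> Y) (HF : forall a b, R a b -> F a = F b) x y : F x = y -> F (rep (@cls X R x)) = y.
Proof. intro E; rewrite <- E.
  assert (G : forall a b, clos_refl_sym_trans X R a b -> F a = F b).
  { intros a b H; induction H; auto; congruence. }
  apply G, rep_rel. Qed.
End Q.


Definition PF {C D : Cat} (p : Prof C D) : Prop :=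
  (forall d c x, pmap p (@idm D d) (@idm C c) x = x) /\
  (forall d'' d' d c c' c'' (h1 : @hom D d' d) (h2 : @hom D d'' d') (k1 : @hom C c c') (k2 : @hom C c' c'') x,
      pmap p h2 k2 (pmap p h1 k1 x) = pmap p (cmp h1 h2) (cmp k2 k1) x).


Notation cc q p d x y := (@cls (CTot q p _ _) (CRel q p _ _) (existT _ d (x, y))).

Section PC.
Context {C D E : Cat} (q : Prof D E) (p : Prof C D).

Lemma crel_eq e c d d' (k : @hom D d d') (x : pob q e d) (y : pob p d' c) :
  cc q p d' (pmap q (idm e) k x) y = cc q p d x (pmap p k (idm c) y).
Proof. apply cls_eq. apply rst_step. apply crel. Qed.

Lemma pmap_pcomp_cls (Hq : PF q) (Hp : PF p) e' e c c' (h : @hom E e' e) (k : @hom C c c') d x y :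
  pmap (pcomp q p) h k (cc q p d x y : pob (pcomp q p) e c) = cc q p d (pmap q h (idm d) x) (pmap p (idm d) k y).
Proof.
  unfold pcomp; cbn [pmap].
  apply (lift (fun t : CTot q p e c => let '(existT _ d (x, y)) := t in (cc q p d (pmap q h (idm d) x) (pmap p (idm d) k y) : pob (pcomp q p) e' c'))); [|reflexivity].
  intros a b Hab. destruct Hab as [d1 d2 k0 x0 y0].
  destruct Hq as [_ Hq2]; destruct Hp as [_ Hp2].
  replace (pmap p (idm d1) k (pmap p k0 (idm c) y0)) with (pmap p k0 (idm c') (pmap p (idm d2) k y0))
    by (rewrite !Hp2; nrm; reflexivity).
  rewrite <- crel_eq. f_equal. f_equal. f_equal. rewrite !Hq2. nrm. reflexivity.
Qed.

Lemma PF_pcomp (Hq : PF q) (Hp : PF p) : PF (pcomp q p).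
Proof.
  split.
  - intros e c z. rewrite <- (cls_rep z). destruct (rep z) as [d0 [x y]].
    rewrite pmap_pcomp_cls by auto. destruct Hq as [Hq1 _]; destruct Hp as [Hp1 _]. rewrite Hq1, Hp1. reflexivity.
  - intros. rewrite <- (cls_rep x). destruct (rep x) as [d0 [u v]].
    rewrite !pmap_pcomp_cls by auto. destruct Hq as [_ Hq2]; destruct Hp as [_ Hp2].
    rewrite Hq2, Hp2. nrm. reflexivity.
Qed.
End PC.

Lemma PF_pstar {C D} (F : Functor C D) : PF (pstar F).
Proof. split; intros; simpl.
  - rewrite fmap_id. nrm. reflexivity.
  - rewrite fmap_cmp. nrm. reflexivity. Qed.
Lemma PF_pupper {C D} (F : Functor C D) : PF (pupper F).
Proof. split; intros; simpl.
  - rewrite fmap_id. nrm. reflexivity.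
  - rewrite fmap_cmp. nrm. reflexivity. Qed.
Lemma PF_Hom C : PF (HomP C).
Proof. split; intros; simpl; nrm; reflexivity. Qed.



Lemma hcomp_cls {C D E : Cat} {q q' : Prof D E} {p p' : Prof C D} (b : Tr q q') (g : Tr p p')
  (Hb : forall e d d' (k : @hom D d d') x, b e d' (pmap q (idm e) k x) = pmap q' (idm e) k (b e d x))
  (Hg : forall d d' c (k : @hom D d d') y, g d c (pmap p k (idm c) y) = pmap p' k (idm c) (g d' c y))
  e c d x y :
  hcomp b g e c (cc q p d x y) = cc q' p' d (b e d x) (g d c y).
Proof.
  unfold hcomp.
  apply (lift (fun t : CTot q p e c => let '(existT _ d (x, y)) := t in (cc q' p' d (b e d x) (g d c y) : pob (pcomp q' p') e c))); [|reflexivity].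
  intros a a' Hab. destruct Hab as [d1 d2 k0 x0 y0].
  rewrite Hb, Hg. apply crel_eq.
Qed.

Lemma nat_b {C D : Cat} {P Q : Prof C D} (t : Tr P Q) : Natural t ->
  forall e d d' (k : @hom C d d') x, t e d' (pmap P (idm e) k x) = pmap Q (idm e) k (t e d x).
Proof. intros H; intros; apply H. Qed.
Lemma nat_g {C D : Cat} {P Q : Prof C D} (t : Tr P Q) : Natural t ->
  forall d d' c (k : @hom D d d') y, t d c (pmap P k (idm c) y) = pmap Q k (idm c) (t d' c y).
Proof. intros H; intros; apply H. Qed.

Lemma tid_nat {C D} (P : Prof C D) : Natural (tid P).
Proof. intros ? ? ? ? ? ? ?; reflexivity. Qed.

Lemma hcomp_tid {C D E : Cat} (q : Prof D E) (p : Prof C D) e c z :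
  hcomp (tid q) (tid p) e c z = z.
Proof. unfold hcomp, tid. rewrite <- (cls_rep z) at 2. destruct (rep z) as [d [x y]]. reflexivity. Qed.

Lemma hcomp_nat {C D E : Cat} {q q' : Prof D E} {p p' : Prof C D} (b : Tr q q') (g : Tr p p')
  (Hq : PF q) (Hp : PF p) (Hq' : PF q') (Hp' : PF p') :
  Natural b -> Natural g -> Natural (hcomp b g).
Proof.
  intros Nb Ng e' e c c' h k z. rewrite <- (cls_rep z). destruct (rep z) as [d [x y]].
  rewrite pmap_pcomp_cls by auto. rewrite !hcomp_cls by (apply nat_b || apply nat_g; auto).
  rewrite pmap_pcomp_cls by auto. rewrite Nb, Ng. reflexivity.
Qed.

Section Asc.
Context {C D E F : Cat} (r : Prof E F) (q : Prof D E) (p : Prof C D) (Hr : PF r) (Hq : PF q) (Hp : PF p).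

Lemma assoc_in f c d (y : pob p d c) e x v :
  (let '(existT _ e (x, v)) := rep (cc r q e x v : pob (pcomp r q) f d) in
     (cc r (pcomp q p) e x (cc q p d v y : pob (pcomp q p) e c) : pob (pcomp r (pcomp q p)) f c))
  = cc r (pcomp q p) e x (cc q p d v y).
Proof.
  apply (lift (fun t : CTot r q f d => let '(existT _ e (x, v)) := t in
     (cc r (pcomp q p) e x (cc q p d v y : pob (pcomp q p) e c) : pob (pcomp r (pcomp q p)) f c))); [|reflexivity].
  intros a a' Hab. destruct Hab as [e1 e2 k0 x0 v0].
  replace (cc q p d (pmap q k0 (idm d) v0) y : pob (pcomp q p) e1 c)
   with (pmap (pcomp q p) k0 (idm c) (cc q p d v0 y)).
  - apply crel_eq.
  - rewrite pmap_pcomp_cls by auto. destruct Hp as [Hp1 _]. rewrite Hp1. reflexivity.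
Qed.

Lemma assoc_cls f c d e x v y :
  assoc r q p f c (cc (pcomp r q) p d (cc r q e x v : pob (pcomp r q) f d) y)
  = cc r (pcomp q p) e x (cc q p d v y).
Proof.
  unfold assoc.
  apply (lift (fun t : CTot (pcomp r q) p f c => let '(existT _ d (w, y)) := t in
     let '(existT _ e (x, v)) := rep w in
     (cc r (pcomp q p) e x (cc q p d v y : pob (pcomp q p) e c) : pob (pcomp r (pcomp q p)) f c))).
  2: apply assoc_in.
  intros a a' Hab. destruct Hab as [d1 d2 k0 w0 y0].
  rewrite <- (cls_rep w0). destruct (rep w0) as [e0 [x0 v0]].
  rewrite pmap_pcomp_cls by auto. destruct Hr as [Hr1 _]. rewrite Hr1.
  rewrite !assoc_in. rewrite crel_eq. reflexivity.
Qed.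

Lemma assoc_inv_in f c e (x : pob r f e) d v y :
  (let '(existT _ d (v, y)) := rep (cc q p d v y : pob (pcomp q p) e c) in
     (cc (pcomp r q) p d (cc r q e x v : pob (pcomp r q) f d) y : pob (pcomp (pcomp r q) p) f c))
  = cc (pcomp r q) p d (cc r q e x v) y.
Proof.
  apply (lift (fun t : CTot q p e c => let '(existT _ d (v, y)) := t in
     (cc (pcomp r q) p d (cc r q e x v : pob (pcomp r q) f d) y : pob (pcomp (pcomp r q) p) f c))); [|reflexivity].
  intros a a' Hab. destruct Hab as [d1 d2 k0 v0 y0].
  replace (cc r q e x (pmap q (idm e) k0 v0) : pob (pcomp r q) f d2)
   with (pmap (pcomp r q) (idm f) k0 (cc r q e x v0)).
  - apply crel_eq.
  - rewrite pmap_pcomp_cls by auto. destruct Hr as [Hr1 _]. rewrite Hr1. reflexivity.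
Qed.

Lemma assoc_inv_cls f c d e x v y :
  assoc_inv r q p f c (cc r (pcomp q p) e x (cc q p d v y : pob (pcomp q p) e c))
  = cc (pcomp r q) p d (cc r q e x v) y.
Proof.
  unfold assoc_inv.
  apply (lift (fun t : CTot r (pcomp q p) f c => let '(existT _ e (x, w)) := t in
     let '(existT _ d (v, y)) := rep w in
     (cc (pcomp r q) p d (cc r q e x v : pob (pcomp r q) f d) y : pob (pcomp (pcomp r q) p) f c))).
  2: apply assoc_inv_in.
  intros a a' Hab. destruct Hab as [e1 e2 k0 x0 w0].
  rewrite <- (cls_rep w0). destruct (rep w0) as [d0 [v0 y0]].
  rewrite pmap_pcomp_cls by auto. destruct Hp as [Hp1 _]. rewrite Hp1.
  rewrite !assoc_inv_in. rewrite crel_eq. reflexivity.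
Qed.

Lemma assoc_inv_nat : Natural (assoc_inv r q p).
Proof.
  intros f' f c c' h k z. rewrite <- (cls_rep z). destruct (rep z) as [e [x w]].
  rewrite <- (cls_rep w). destruct (rep w) as [d [v y]].
  rewrite pmap_pcomp_cls by (auto using PF_pcomp).
  rewrite pmap_pcomp_cls by auto.
  rewrite !assoc_inv_cls.
  rewrite pmap_pcomp_cls by (auto using PF_pcomp).
  rewrite pmap_pcomp_cls by auto. reflexivity.
Qed.
End Asc.

Lemma lunit_cls {C D} (p : Prof C D) (Hp : PF p) d c d' (h : @hom D d d') y :
  lunit p d c (cc (HomP D) p d' (h : pob (HomP D) d d') y) = pmap p h (idm c) y.
Proof.
  unfold lunit.
  apply (lift (fun t : CTot (HomP D) p d c => let '(existT _ d' (h, y)) := t in pmap p h (idm c) y)); [|reflexivity].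
  intros a a' Hab. destruct Hab as [d1 d2 k0 x0 y0]. destruct Hp as [_ Hp2].
  simpl. rewrite Hp2. nrm. reflexivity.
Qed.

Lemma lunit_nat {C D} (p : Prof C D) (Hp : PF p) : Natural (lunit p).
Proof.
  intros d' d c c' h k z. rewrite <- (cls_rep z). destruct (rep z) as [e [x y]].
  rewrite pmap_pcomp_cls by (auto using PF_Hom). rewrite !lunit_cls by auto.
  destruct Hp as [_ Hp2]. rewrite !Hp2. simpl. nrm. reflexivity.
Qed.

Lemma counit_cls {C D} (F : Functor C D) d d' c x y :
  adj_counit F d d' (cc (pstar F) (pupper F) c x y) = cmp (y : @hom D (fob F c) d') (x : @hom D d (fob F c)).
Proof.
  unfold adj_counit.
  apply (lift (fun t : CTot (pstar F) (pupper F) d d' => let '(existT _ c (x, y)) := t in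
     (cmp (y : @hom D (fob F c) d') (x : @hom D d (fob F c)) : pob (HomP D) d d'))); [|reflexivity].
  intros a a' Hab. destruct Hab as [d1 d2 k0 x0 y0]. simpl. nrm. reflexivity.
Qed.

Lemma counit_nat {C D} (F : Functor C D) : Natural (adj_counit F).
Proof.
  intros d' d c c' h k z. rewrite <- (cls_rep z). destruct (rep z) as [e [x y]].
  rewrite pmap_pcomp_cls by (auto using PF_pstar, PF_pupper). rewrite !counit_cls.
  simpl. rewrite !fmap_id. nrm. reflexivity.
Qed.



Lemma hcomp_clsA {X : Type} {C E : Cat} {q q' : Prof (Disc X) E} {p p' : Prof C (Disc X)} (b : Tr q q') (g : Tr p p')
  (Hq : PF q) (Hp : PF p) (Hq' : PF q') (Hp' : PF p') e c d x y :
  hcomp b g e c (cc q p d x y) = cc q' p' d (b e d x) (g d c y).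
Proof.
  apply hcomp_cls.
  - intros e0 d0 d1 k x0. destruct k. rewrite (proj1 Hq), (proj1 Hq'). reflexivity.
  - intros d0 d1 c0 k y0. destruct k. rewrite (proj1 Hp), (proj1 Hp'). reflexivity.
Qed.

Section Main.
Variable B : Cat.
Notation A := (Disc (ob B)).
Notation i := (incl B).

Lemma PFd d : PF (dstar B d). Proof. apply PF_pstar. Qed.
Lemma PFiu : PF (pupper i). Proof. apply PF_pupper. Qed.
Lemma PFis : PF (pstar i). Proof. apply PF_pstar. Qed.
Lemma PFin d : PF (pcomp (pupper i) (dstar B d)). Proof. apply PF_pcomp; [apply PFiu|apply PFd]. Qed.
Lemma PFt d : PF (tens B (dstar B d) (dstar B d)). Proof. apply PF_pcomp; [apply PFd|apply PFin]. Qed.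
Hint Resolve PFd PFiu PFis PFin PFt PF_Hom : pf.

Lemma inner_norm d c c' a (k : pob (pupper i) c c') (f : pob (dstar B d) c' a) :
  cc (pupper i) (dstar B d) c' k f = cc (pupper i) (dstar B d) c (@idm B c : pob (pupper i) c c) (cmp f k : pob (dstar B d) c a).
Proof.
  transitivity (cc (pupper i) (dstar B d) c' (pmap (pupper i) (idm c) k (@idm B c : pob (pupper i) c c)) f).
  - f_equal. f_equal. f_equal. simpl. nrm. reflexivity.
  - rewrite crel_eq. f_equal. f_equal. f_equal. simpl. nrm. reflexivity.
Qed.

Lemma mu_formula d (mu : Tr (tens B (dstar B d) (dstar B d)) (dstar B d)) (Nmu : Natural mu) b a c c'
  (x : pob (dstar B d) b c) (k : pob (pupper i) c c') (f : pob (dstar B d) c' a) :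
  mu b a (cc (dstar B d) (pcomp (pupper i) (dstar B d)) c x (cc (pupper i) (dstar B d) c' k f))
  = cmp (PhiT B d mu c a (cmp f k)) x.
Proof.
  rewrite inner_norm.
  transitivity (mu b a (pmap (tens B (dstar B d) (dstar B d)) x (idm a : @hom A a a)
     (cc (dstar B d) (pcomp (pupper i) (dstar B d)) c (@idm B (d c) : pob (dstar B d) (d c) c)
          (cc (pupper i) (dstar B d) c (@idm B c : pob (pupper i) c c) (cmp f k : pob (dstar B d) c a))))).
  - f_equal. unfold tens. rewrite pmap_pcomp_cls by auto with pf.
    rewrite (pmap_pcomp_cls (pupper i) (dstar B d)) by auto with pf. simpl. nrm. reflexivity.
  - rewrite Nmu. unfold PhiT. simpl. nrm. reflexivity.
Qed.

Lemma eta_formula d (eta : Tr (unitK B) (dstar B d)) (Neta : Natural eta) b a (h : pob (unitK B) b a) :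
  eta b a h = cmp (PhiK B d eta a) h.
Proof.
  transitivity (eta b a (pmap (unitK B) h (idm a : @hom A a a) (@idm B a : pob (unitK B) a a))).
  - f_equal. simpl. nrm. reflexivity.
  - rewrite Neta. unfold PhiK. simpl. nrm. reflexivity.
Qed.
End Main.



Section Main2.
Variable B : Cat.
Notation A := (Disc (ob B)).
Notation i := (incl B).
Hint Resolve PFd PFiu PFis PFin PFt PF_Hom : pf.

Definition mu_T d (T : forall x y, @hom B x (d y) -> @hom B (d x) (d y)) : Tr (tens B (dstar B d) (dstar B d)) (dstar B d) :=
  fun b a z => let '(existT _ c (x, w)) := rep z in
    let '(existT _ c' (k, f)) := rep w in
      (cmp (T c a (cmp (f : @hom B c' (d a)) (k : @hom B c c'))) (x : @hom B b (d c)) : pob (dstar B d) b a).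

Lemma mu_T_cls d T b a c c' (x : pob (dstar B d) b c) (k : pob (pupper i) c c') (f : pob (dstar B d) c' a) :
  mu_T d T b a (cc (dstar B d) (pcomp (pupper i) (dstar B d)) c x (cc (pupper i) (dstar B d) c' k f))
  = cmp (T c a (cmp (f : @hom B c' (d a)) (k : @hom B c c'))) (x : @hom B b (d c)).
Proof.
  unfold mu_T.
  apply (lift (fun t : CTot (dstar B d) (pcomp (pupper i) (dstar B d)) b a => let '(existT _ c (x, w)) := t in
    let '(existT _ c' (k, f)) := rep w in
      (cmp (T c a (cmp (f : @hom B c' (d a)) (k : @hom B c c'))) (x : @hom B b (d c)) : pob (dstar B d) b a))).
  - intros t t' H. destruct H as [c1 c2 k0 x0 w0]. destruct k0.
    rewrite (proj1 (PFd B d)), (proj1 (PFin B d)). reflexivity.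
  - apply (lift (fun t : CTot (pupper i) (dstar B d) c a => let '(existT _ c' (k, f)) := t in
      (cmp (T c a (cmp (f : @hom B c' (d a)) (k : @hom B c c'))) (x : @hom B b (d c)) : pob (dstar B d) b a))).
    + intros t t' H. destruct H as [c1 c2 k0 x0 y0]. simpl. nrm. reflexivity.
    + reflexivity.
Qed.

Lemma mu_T_nat d T : Natural (mu_T d T).
Proof.
  intros b' b a a' h k z. rewrite <- (cls_rep z). destruct (rep z) as [c [x w]].
  rewrite <- (cls_rep w). destruct (rep w) as [c' [kk f]].
  unfold tens. rewrite (pmap_pcomp_cls (dstar B d) (pcomp (pupper i) (dstar B d))) by auto with pf.
  rewrite (pmap_pcomp_cls (pupper i) (dstar B d)) by auto with pf.
  rewrite !mu_T_cls. destruct k. simpl. nrm. reflexivity.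
Qed.

Lemma mu_T_Phi d T x y f : PhiT B d (mu_T d T) x y f = T x y f.
Proof. unfold PhiT. rewrite mu_T_cls. nrm. reflexivity. Qed.

Definition eta_K d (K : forall x, @hom B x (d x)) : Tr (unitK B) (dstar B d) :=
  fun b a h => (cmp (K a) (h : @hom B b a) : pob (dstar B d) b a).

Lemma eta_K_nat d K : Natural (eta_K d K).
Proof. intros b' b a a' h k z. destruct k. unfold eta_K. simpl. nrm. reflexivity. Qed.

Lemma eta_K_Phi d K x : PhiK B d (eta_K d K) x = K x.
Proof. unfold PhiK, eta_K. nrm. reflexivity. Qed.

Lemma mu_uniq d (mu mu' : Tr (tens B (dstar B d) (dstar B d)) (dstar B d)) :
  Natural mu -> Natural mu' -> (forall x y f, PhiT B d mu x y f = PhiT B d mu' x y f) -> TrEq mu mu'.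
Proof.
  intros N N' H b a z. rewrite <- (cls_rep z). destruct (rep z) as [c [x w]].
  rewrite <- (cls_rep w). destruct (rep w) as [c' [kk f]].
  rewrite !mu_formula by auto. rewrite H. reflexivity.
Qed.

Lemma eta_uniq d (eta eta' : Tr (unitK B) (dstar B d)) :
  Natural eta -> Natural eta' -> (forall x, PhiK B d eta x = PhiK B d eta' x) -> TrEq eta eta'.
Proof. intros N N' H b a h. rewrite !eta_formula by auto. rewrite H. reflexivity. Qed.
End Main2.


Ltac pfs := repeat (first [apply PFd | apply PFiu | apply PFis | apply PF_Hom | apply PF_pstar | apply PF_pupper | apply PF_pcomp]).

Lemma runit_inv_eq {C D : Cat} (p : Prof C D) d c y : runit_inv p d c y = cc p (HomP C) c y (idm c).
Proof. reflexivity. Qed.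
Lemma adj_unit_eq {C D : Cat} (F : Functor C D) c' c k :
  adj_unit F c' c k = cc (pupper F) (pstar F) (fob F c) (fmap F k : pob (pupper F) c' (fob F c)) (idm (fob F c) : pob (pstar F) (fob F c) c).
Proof. reflexivity. Qed.

Section Main3.
Variable B : Cat.
Notation A := (Disc (ob B)).
Notation i := (incl B).
Hint Resolve PFd PFiu PFis PFin PFt PF_Hom : pf.
Variable d : ob B -> ob B.
Notation M := (dstar B d).
Notation In := (pcomp (pupper i) (dstar B d)).
Variable mu : Tr (tens B M M) M.
Hypothesis Nmu : Natural mu.

Lemma assoc_L b a c e e' c' (x : pob M b e) (k' : pob (pupper i) e e') (g : pob M e' c)
  (k : pob (pupper i) c c') (f : pob M c' a) :
  vcomp mu (tens2 B mu (tid M)) b a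
    (cc (tens B M M) In c (cc M In e x (cc (pupper i) M e' k' g)) (cc (pupper i) M c' k f))
  = cmp (PhiT B d mu c a (cmp f k)) (cmp (PhiT B d mu e c (cmp g k')) x).
Proof.
  unfold vcomp, tens2. rewrite (hcomp_clsA (q:=tens B M M) (p:=In)) by auto with pf. rewrite hcomp_tid.
  rewrite !mu_formula by auto. reflexivity.
Qed.

Lemma assoc_R b a c e e' c' (x : pob M b e) (k' : pob (pupper i) e e') (g : pob M e' c)
  (k : pob (pupper i) c c') (f : pob M c' a) :
  vcomp mu (vcomp (tens2 B (tid M) mu) (alphaK B M M M)) b a
    (cc (tens B M M) In c (cc M In e x (cc (pupper i) M e' k' g)) (cc (pupper i) M c' k f))
  = cmp (PhiT B d mu e a (cmp (cmp (PhiT B d mu c a (cmp f k)) g) k')) x.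
Proof.
  unfold alphaK, vcomp, tens2, tens.
  rewrite (assoc_cls M In In) by auto with pf.
  unfold vcomp. rewrite (hcomp_clsA (q:=M) (p:=pcomp In In)) by pfs.
  rewrite (assoc_cls (pupper i) M In) by auto with pf.
  rewrite hcomp_clsA by pfs.
  rewrite (hcomp_cls (q:=pupper i) (p:=pcomp M In)); [| apply nat_b, tid_nat | apply nat_g, Nmu].
  unfold tid. rewrite !mu_formula by auto. reflexivity.
Qed.

Variable eta : Tr (unitK B) M.
Hypothesis Neta : Natural eta.

Lemma left_L b a c c' (h : pob (unitK B) b c) (k : pob (pupper i) c c') (f : pob M c' a) :
  vcomp mu (tens2 B eta (tid M)) b a (cc (unitK B) In c h (cc (pupper i) M c' k f))
  = cmp (PhiT B d mu c a (cmp f k)) (cmp (PhiK B d eta c) h).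
Proof.
  unfold vcomp, tens2. rewrite (hcomp_clsA (q:=unitK B) (p:=In)) by pfs. rewrite hcomp_tid.
  rewrite mu_formula by auto. rewrite eta_formula by auto. reflexivity.
Qed.

Lemma left_R b a c c' (h : pob (unitK B) b c) (k : pob (pupper i) c c') (f : pob M c' a) :
  lamK B M b a (cc (unitK B) In c h (cc (pupper i) M c' k f))
  = cmp (f : @hom B c' (d a)) (cmp (k : @hom B c c') (h : @hom B b c)).
Proof.
  unfold lamK, vcomp, unitK.
  rewrite (assoc_inv_cls (pstar i) (pupper i) M) by pfs.
  rewrite (hcomp_cls (q:=pcomp (pstar i) (pupper i)) (p:=M)); [| apply nat_b, counit_nat | apply nat_g, tid_nat].
  rewrite counit_cls. unfold tid. rewrite lunit_cls by pfs. simpl. nrm. reflexivity.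
Qed.

Lemma right_LR b a (y : pob M b a) :
  vcomp mu (vcomp (tens2 B (tid M) eta) (rhoK B M)) b a y = cmp (PhiT B d mu a a (PhiK B d eta a)) y.
Proof.
  unfold tens2, rhoK, vcomp. rewrite runit_inv_eq.
  rewrite (hcomp_clsA (q:=M) (p:=HomP A)) by pfs.
  rewrite adj_unit_eq. unfold tid.
  unfold unitK in *. rewrite (hcomp_clsA (q:=M) (p:=pcomp (pupper i) (pstar i))) by pfs.
  rewrite (hcomp_cls (q:=pupper i) (p:=pstar i)); [| intros; reflexivity | apply nat_g, Neta].
  unfold tid. rewrite mu_formula by auto. simpl. unfold PhiK. nrm. reflexivity.
Qed.

Lemma part5 : (MonAssoc B mu <-> MwAssoc (PhiT B d mu)) /\
  (MonLeft B mu eta <-> MwLeft (PhiT B d mu) (PhiK B d eta)) /\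
  (MonRight B mu eta <-> MwRight (PhiT B d mu) (PhiK B d eta)).
Proof.
  split; [|split]; split.
  - intros H x y z f g.
    pose proof (H (d x) z (cc (tens B M M) In y (cc M In x (@idm B (d x) : pob M (d x) x)
        (cc (pupper i) M x (@idm B x : pob (pupper i) x x) f)) (cc (pupper i) M y (@idm B y : pob (pupper i) y y) g))) as E.
    rewrite assoc_L, assoc_R in E. nrm. rewrite !cmp_idr in E. exact E.
  - intros H b a z. rewrite <- (cls_rep z). destruct (rep z) as [c [w v]].
    rewrite <- (cls_rep w). destruct (rep w) as [e [x u]].
    rewrite <- (cls_rep u). destruct (rep u) as [e' [k' g]].
    rewrite <- (cls_rep v). destruct (rep v) as [c' [k f]].
    rewrite assoc_L, assoc_R. rewrite cmp_assoc. rewrite H. nrm. reflexivity.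
  - intros H x y f.
    pose proof (H (x) y (cc (unitK B) In x (@idm B x : pob (unitK B) x x)
        (cc (pupper i) M x (@idm B x : pob (pupper i) x x) f))) as E.
    rewrite left_L, left_R in E. nrm. rewrite !cmp_idr in E. exact E.
  - intros H b a z. rewrite <- (cls_rep z). destruct (rep z) as [c [h v]].
    rewrite <- (cls_rep v). destruct (rep v) as [c' [k f]].
    rewrite left_L, left_R. rewrite cmp_assoc. rewrite H. nrm. reflexivity.
  - intros H x. pose proof (H (d x) x (@idm B (d x) : pob M (d x) x)) as E.
    rewrite right_LR in E. unfold tid in E. rewrite cmp_idr in E. exact E.
  - intros H b a y. rewrite right_LR. rewrite H. unfold tid. apply cmp_idl.
Qed.
End Main3.



Section Mon.
Variable B : Cat.
Notation A := (Disc (ob B)).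
Notation i := (incl B).
Variables (Dm : Functor B B) (m : forall x, @hom B (fob Dm (fob Dm x)) (fob Dm x)) (e : forall x, @hom B x (fob Dm x)).
Hypothesis mnat : forall a b (f : @hom B a b), cmp (fmap Dm f) (m a) = cmp (m b) (fmap Dm (fmap Dm f)).
Hypothesis enat : forall a b (f : @hom B a b), cmp (fmap Dm f) (e a) = cmp (e b) f.
Notation M := (dstar B (fob Dm)).
Notation Ds := (pstar Dm).
Notation In := (pcomp (pupper i) M).

Lemma phiD_inv_eq b a z : phiD_inv B Dm b a z = cc Ds (pstar i) a (z : pob Ds b a) (@idm B a : pob (pstar i) a a).
Proof. reflexivity. Qed.
Lemma lunit_inv_eq {C D : Cat} (p : Prof C D) d c y : lunit_inv p d c y = cc (HomP D) p d (idm d : pob (HomP D) d d) y.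
Proof. reflexivity. Qed.

Lemma phiD_cls b a b' (x : pob Ds b b') (y : pob (pstar i) b' a) :
  phiD B Dm b a (cc Ds (pstar i) b' x y) = cmp (fmap Dm (y : @hom B b' a)) (x : @hom B b (fob Dm b')).
Proof.
  unfold phiD.
  apply (lift (fun t : CTot Ds (pstar i) b a => let '(existT _ b' (x, y)) := t in
     (cmp (fmap Dm (y : @hom B b' a)) (x : @hom B b (fob Dm b')) : pob M b a))); [|reflexivity].
  intros t t' H. destruct H as [d1 d2 k0 x0 y0]. simpl. rewrite !fmap_cmp, !fmap_id. nrm. reflexivity.
Qed.

Lemma muD_cls b a c (x : pob Ds b c) (y : pob Ds c a) :
  muD B Dm m b a (cc Ds Ds c x y) = cmp (m a) (cmp (fmap Dm (y : @hom B c (fob Dm a))) (x : @hom B b (fob Dm c))).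
Proof.
  unfold muD.
  apply (lift (fun t : CTot Ds Ds b a => let '(existT _ c (x, y)) := t in
     (cmp (m a) (cmp (fmap Dm (y : @hom B c (fob Dm a))) (x : @hom B b (fob Dm c))) : pob Ds b a))); [|reflexivity].
  intros t t' H. destruct H as [d1 d2 k0 x0 y0]. simpl. rewrite !fmap_cmp, !fmap_id. nrm. reflexivity.
Qed.

Definition Tm := fun x y (f : @hom B x (fob Dm y)) => cmp (m y) (fmap Dm f).

Lemma uMu_eq b a z : uMu B Dm m b a z = mu_T B (fob Dm) Tm b a z.
Proof.
  rewrite <- (cls_rep z). destruct (rep z) as [c [x w]].
  rewrite <- (cls_rep w). destruct (rep w) as [c' [k f]].
  rewrite mu_T_cls.
  unfold uMu, tens2, vcomp.
  rewrite (hcomp_clsA (q:=M) (p:=In)) by pfs.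
  rewrite (hcomp_cls (q:=pupper i) (p:=M) (q':=pupper i) (p':=uK B Ds)).
  2: intros; reflexivity.
  2: { intros d0 d1 c0 kk y0. rewrite !phiD_inv_eq. unfold uK.
       rewrite (pmap_pcomp_cls Ds (pstar i)) by pfs. simpl. rewrite !fmap_id. nrm. reflexivity. }
  rewrite !phiD_inv_eq. unfold tid.
  unfold uK_mult, vcomp, tens, uK.
  rewrite (assoc_cls Ds (pstar i) (pcomp (pupper i) (pcomp Ds (pstar i)))) by pfs.
  rewrite (hcomp_cls (q:=Ds) (p:=pcomp (pstar i) (pcomp (pupper i) (pcomp Ds (pstar i))))).
  2: intros; reflexivity.
  2: apply nat_g, assoc_inv_nat; pfs.
  rewrite (assoc_inv_cls (pstar i) (pupper i) (pcomp Ds (pstar i))) by pfs.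
  rewrite (hcomp_cls (q:=Ds) (p:=pcomp (pcomp (pstar i) (pupper i)) (pcomp Ds (pstar i)))).
  2: intros; reflexivity.
  2: apply nat_g, hcomp_nat; [pfs|pfs|pfs|pfs|apply counit_nat|apply tid_nat].
  rewrite (hcomp_cls (q:=pcomp (pstar i) (pupper i)) (p:=pcomp Ds (pstar i))).
  2: apply nat_b, counit_nat.
  2: intros; reflexivity.
  rewrite counit_cls.
  rewrite (hcomp_cls (q:=Ds) (p:=pcomp (HomP B) (pcomp Ds (pstar i)))).
  2: intros; reflexivity.
  2: apply nat_g, lunit_nat; pfs.
  rewrite lunit_cls by pfs.
  unfold tid. rewrite (pmap_pcomp_cls Ds (pstar i)) by pfs.
  rewrite (assoc_inv_cls Ds Ds (pstar i)) by pfs.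
  unfold uK2.
  rewrite (hcomp_cls (q:=pcomp Ds Ds) (p:=pstar i)).
  2: { intros e0 d0 d1 kk x0. rewrite <- (cls_rep x0). destruct (rep x0) as [c0 [u v]].
       rewrite (pmap_pcomp_cls Ds Ds) by pfs. rewrite !muD_cls. simpl.
       rewrite !fmap_cmp, !fmap_id. nrm. rewrite mnat. nrm. reflexivity. }
  2: intros; reflexivity.
  rewrite muD_cls, phiD_cls. unfold Tm, tid. simpl. rewrite !fmap_cmp, !fmap_id. nrm. reflexivity.
Qed.

Lemma uEta_eq b a h : uEta B Dm e b a h = eta_K B (fob Dm) e b a h.
Proof.
  unfold uEta, vcomp, uK_unit. rewrite lunit_inv_eq. unfold uK2.
  rewrite (hcomp_cls (q:=HomP B) (p:=pstar i)).
  2: { intros e0 d0 d1 kk x0. unfold etaD. simpl. nrm. rewrite enat. reflexivity. }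
  2: intros; reflexivity.
  rewrite phiD_cls. unfold etaD, eta_K, tid. simpl. nrm. rewrite enat. reflexivity.
Qed.
End Mon.



Theorem mainTheorem7 (B : Cat) :
  (forall d : ob B -> ob B,
     (forall K : forall x, @hom B x (d x),
        exists eta : Tr (unitK B) (dstar B d),
          Natural eta /\ forall x, PhiK B d eta x = K x) /\
     (forall eta eta' : Tr (unitK B) (dstar B d),
        Natural eta -> Natural eta' ->
        (forall x, PhiK B d eta x = PhiK B d eta' x) -> TrEq eta eta') /\
     (forall T : forall x y, @hom B x (d y) -> @hom B (d x) (d y),
        exists mu : Tr (tens B (dstar B d) (dstar B d)) (dstar B d),
          Natural mu /\ forall x y f, PhiT B d mu x y f = T x y f) /\
     (forall mu mu' : Tr (tens B (dstar B d) (dstar B d)) (dstar B d),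
        Natural mu -> Natural mu' ->
        (forall x y f, PhiT B d mu x y f = PhiT B d mu' x y f) -> TrEq mu mu') /\
     (forall (mu : Tr (tens B (dstar B d) (dstar B d)) (dstar B d))
             (eta : Tr (unitK B) (dstar B d)),
        Natural mu -> Natural eta ->
        (MonAssoc B mu <-> MwAssoc (PhiT B d mu)) /\
        (MonLeft B mu eta <-> MwLeft (PhiT B d mu) (PhiK B d eta)) /\
        (MonRight B mu eta <-> MwRight (PhiT B d mu) (PhiK B d eta)))) /\
  (forall (Dm : Functor B B)
          (m : forall x, @hom B (fob Dm (fob Dm x)) (fob Dm x))
          (e : forall x, @hom B x (fob Dm x)),
     IsMonad B Dm m e ->
     Monoid B (dstar B (fob Dm)) (uMu B Dm m) (uEta B Dm e) /\
     (forall x y (f : @hom B x (fob Dm y)),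
        PhiT B (fob Dm) (uMu B Dm m) x y f = cmp (m y) (fmap Dm f)) /\
     (forall x, PhiK B (fob Dm) (uEta B Dm e) x = e x)).
Proof.
  split.
  - intro d. split; [|split;[|split;[|split]]].
    + intros K. exists (eta_K B d K). split; [apply eta_K_nat | apply eta_K_Phi].
    + apply eta_uniq.
    + intros T. exists (mu_T B d T). split; [apply mu_T_nat| apply mu_T_Phi].
    + apply mu_uniq.
    + intros mu eta Nmu Neta. apply part5; auto.
  - intros Dm m e HM. destruct HM as (Hn & He & Ha & Hl & Hr).
    assert (NU : Natural (uMu B Dm m)).
    { intros b' b a a' h k z. rewrite !uMu_eq by auto. apply mu_T_nat. }
    assert (NE : Natural (uEta B Dm e)).
    { intros b' b a a' h k z. rewrite !uEta_eq by auto. apply eta_K_nat. }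
    assert (HT : forall x y f, PhiT B (fob Dm) (uMu B Dm m) x y f = cmp (m y) (fmap Dm f)).
    { intros x y f. unfold PhiT. rewrite uMu_eq by auto. apply (mu_T_Phi B (fob Dm) (Tm B Dm m)). }
    assert (HK : forall x, PhiK B (fob Dm) (uEta B Dm e) x = e x).
    { intros x. unfold PhiK. rewrite uEta_eq by auto. apply (eta_K_Phi B (fob Dm) e). }
    split; [|split; [exact HT|exact HK]].
    destruct (part5 B (fob Dm) (uMu B Dm m) NU (uEta B Dm e) NE) as (H1 & H2 & H3).
    split; [apply H1|split;[apply H2|apply H3]].
    + intros x y z f g. rewrite !HT. rewrite !fmap_cmp. nrm.
      rewrite <- (cmp_assoc B _ _ _ _ (m z) (fmap Dm g) (m y)). rewrite Hn. nrm.
      rewrite Ha. nrm. reflexivity.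
    + intros x y f. rewrite HT, HK.
      rewrite <- cmp_assoc. rewrite He. nrm. rewrite Hl. nrm. reflexivity.
    + intros x. rewrite HT, HK. apply Hr.
Qed.
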